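(* Let $P=P(G,[\omega])$ be a toric poset over $G=(V,E)$, let $i,j\in V$, and suppose the toric interval $I=[i,j]^{\mathrm{tor}}$ satisfies $|I|\ge3$. Then \[[i,j]^{\mathrm{tor}}=\{i,j\}\cup\{k\in V: [w|_{\{i,j,k\}}]=[(i,k,j)] \text{ for all } [w]\in\mathcal{L}_{\mathrm{tor}}(P)\}.\]
   Context: Toric poset setup: $V=[n]$; $\mathrm{Acyc}(G)$ acyclic orientations; $[\omega]$ the class under the equivalence generated by converting a source into a sink; toric chambers of the toric graphic arrangement (components of $\mathbb{R}^V/\mathbb{Z}^V$ minus the hyperplanes $\{x_i\equiv x_j\bmod 1\}$, $\{i,j\}\in E$) correspond bijectively to the classes $[\omega]$ (a point $x$ with coordinates in $[0,1)$ gives $i\to j$ iff $x_i<x_j$); $P(G,[\omega])$ is identified with its chamber $c(P)$. Toric chain: $C=\{i_1,\dots,i_m\}\subseteq V$ is a toric chain of $P$ if there is a cyclic equivalence class $[(i_1,\dots,i_m)]$ of linear orderings of $C$ such that for every $x\in c(P)$ (coordinates in $[0,1)$) some cyclic shift $(j_1,\dots,j_m)$ satisfies $0\le x_{j_1}<\cdots<x_{j_m}<1$; we write $P|_C=[(i_1,\dots,i_m)]$. Toric interval: $[i,i]^{\mathrm{tor}}=\{i\}$; for $i\neq j$, $[i,j]^{\mathrm{tor}}=\emptyset$ if $\{i,j\}$ is not a toric chain, and otherwise $[i,j]^{\mathrm{tor}}=\{i,j\}\cup\{k\in V: P|_{\{i,j,k\}}=[(i,k,j)]\}$. A toric poset $P'$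 on $V$ is a total toric extension of $P$ if $c(P')\subseteq c(P)$ and $c(P')$ is a chamber of the toric arrangement of the complete graph $K_V$; such $P'$ are indexed by cyclic classes $[w]=[(w_1,\dots,w_n)]$ of permutations of $V$ (the chamber where $0\le x_{w_1}<\dots<x_{w_n}<1$ up to cyclic shift). $\mathcal{L}_{\mathrm{tor}}(P)$ is the set of total toric extensions, and $[w|_C]$ denotes the cyclic order induced on $C\subseteq V$. *)

(* Defs.v *)
From HB Require Import structures.
From mathcomp Require Import all_boot all_order all_algebra.
From Stdlib Require Import ClassicalEpsilon.
Set Implicit Arguments. Unset Strict Implicit. Unset Printing Implicit Defensive.
Import Order.TTheory GRing.Theory Num.Theory.
Local Open Scope ring_scope.

Definition asbool (P : Prop) : bool :=
  if excluded_middle_informative P then true else false.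

Section Toric.
Variable n : nat.
(* V = [n] is represented by 'I_n; G is a simple graph given by a symmetric
   irreflexive edge relation (these are hypotheses of the main theorem). *)
Implicit Types (G om : rel 'I_n).

Definition orientation G om : Prop :=
  (forall a b, om a b -> G a b) /\
  (forall a b, G a b -> om a b || om b a) /\
  (forall a b, ~~ (om a b && om b a)).

Definition acyc_orientation G om : Prop :=
  orientation G om /\ (forall a b, om a b -> ~~ connect om b a).

Definition is_source om (v : 'I_n) : Prop := forall a, ~~ om a v.

Definition flip_at om (v : 'I_n) : rel 'I_n :=
  fun a b => if (a == v) || (b == v) then om b a else om a b.

Inductive torEquiv : rel 'I_n -> rel 'I_n -> Prop :=
| te_ext om om' : (forall a b, om a b = om' a b) -> torEquiv om om'
| te_flip om om' v : is_source om v ->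
    (forall a b, om' a b = flip_at om v a b) -> torEquiv om om'
| te_sym om om' : torEquiv om om' -> torEquiv om' om
| te_trans om1 om2 om3 : torEquiv om1 om2 -> torEquiv om2 om3 -> torEquiv om1 om3.

Variable R : realFieldType.
Implicit Types (x : 'I_n -> R).

Definition in01 x : Prop := forall a, 0 <= x a /\ x a < 1.

Definition orient_of G x : rel 'I_n := fun a b => G a b && (x a < x b).

(* x (coordinates in [0,1)) lies in the toric chamber c(P(G,[om])) *)
Definition in_chamber G om x : Prop :=
  in01 x /\ (forall a b, G a b -> x a != x b) /\ torEquiv (orient_of G x) om.

Definition cyc_sorted x (s : seq 'I_n) : Prop :=
  exists k, sorted (fun a b => x a < x b) (rot k s).

(* P|_C = [s] where C is the underlying set of s (so C is a toric chain) *)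
Definition restricts_to G om (s : seq 'I_n) : Prop :=
  uniq s /\ forall x, in_chamber G om x -> cyc_sorted x s.

Definition toric_chain2 G om (i j : 'I_n) : Prop :=
  exists s, perm_eq s [:: i; j] /\ restricts_to G om s.

Definition tor_interval G om (i j : 'I_n) : {set 'I_n} :=
  if i == j then [set i]
  else if asbool (toric_chain2 G om i j) then
    [set k | (k == i) || (k == j) || asbool (restricts_to G om [:: i; k; j])]
  else set0.

Definition cyc_eq (s t : seq 'I_n) : Prop := exists r, rot r s = t.

(* [w] is (a representative of) a total toric extension of P(G,[om]):
   w is a permutation of V and the chamber of the complete graph K_V
   determined by [w] is contained in c(P). *)
Definition total_ext G om (w : seq 'I_n) : Prop :=
  perm_eq w (enum 'I_n) /\
  forall x, in01 x -> cyc_sorted x w -> in_chamber G om x.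

End Toric.

(* Main.v *)
Require Import Defs.
From HB Require Import structures.
From mathcomp Require Import all_boot all_order all_algebra.
From mathcomp Require Import lra.
From Stdlib Require Import ClassicalEpsilon.
Import Order.TTheory GRing.Theory Num.Theory.

Section Helpers.
Set Implicit Arguments. Unset Strict Implicit. Unset Printing Implicit Defensive.

Definition cyc3 (T : Type) (L : rel T) a b c :=
  [|| L a b && L b c, L b c && L c a | L c a && L a b].

Lemma cyc_eq3 n (p q r : 'I_n) u :
  cyc_eq [:: p; q; r] u <-> [|| u == [:: p; q; r], u == [:: q; r; p] | u == [:: r; p; q]].
Proof.
split.
- case=> [[|[|[|m]]]] <-; rewrite ?eqxx ?orbT //.
- by case/or3P=> /eqP ->; [exists 0|exists 1|exists 2].
Qed.

Lemma cyc_eq_rot n (t u : seq 'I_n) m : cyc_eq (rot m t) u -> cyc_eq t u.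
Proof.
case=> r <-.
case: (leqP (size t) m) => hm; first by rewrite (rot_oversize hm); exists r.
case: (leqP (size t) r) => hr.
  by exists m; rewrite (rot_oversize (n:=r)) // size_rot.
exists (if r + m <= size t then r + m else r + m - size t).
by rewrite rot_add_mod // ltnW.
Qed.

Lemma filter_rot (T : Type) (P : pred T) m (s : seq T) :
  exists m', filter P (rot m s) = rot m' (filter P s).
Proof.
exists (size (filter P (take m s))).
have -> : filter P s = filter P (take m s) ++ filter P (drop m s)
  by rewrite -filter_cat cat_take_drop.
by rewrite rot_size_cat /rot filter_cat.
Qed.

Lemma idx_sorted (T : eqType) (w : seq T) : uniq w ->
  sorted (fun a b => index a w < index b w) w.
Proof.
move=> uw; case: w uw => [//|x0 w'] uw.
apply: pairwise_sorted; apply/(pairwiseP x0) => a b ha hb ab.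
by rewrite !index_uniq.
Qed.

Lemma idx_order (T : eqType) (L : rel T) (s : seq T) a b :
  transitive L -> irreflexive L -> (forall a b, L a b -> ~~ L b a) ->
  uniq s -> sorted L s -> a \in s -> b \in s ->
  L a b = (index a s < index b s).
Proof.
move=> tL iL aL us ss ha hb.
case: (ltngtP (index a s) (index b s)) => h.
- by rewrite (sorted_ltn_index tL ss).
- by apply/negbTE/aL; rewrite (sorted_ltn_index tL ss).
- by rewrite (index_inj a ha hb h) iL.
Qed.

Lemma tripleC0 n (L : rel 'I_n) (t : seq 'I_n) (i j k : 'I_n) :
  transitive L -> sorted L t -> uniq t -> size t = 3 ->
  {subset t <= [:: i; j; k]} ->
  i != j -> i != k -> j != k ->
  (forall a b, L a b -> L b a -> a != b -> a \in [:: i;j;k] -> b \in [::i;j;k] -> False) ->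
  cyc_eq t [:: i; k; j] <-> cyc3 L i k j.
Proof.
move=> tL; case: t => [|a [|b [|c [|]]]] //= /andP[Hab /andP[Hbc _]].
rewrite !inE negb_or => /and3P[/andP[nab nac] nbc _] _ sub ij ik jk asy.
have Hac := tL _ _ _ Hab Hbc.
have ma : a \in [:: i;j;k] by apply: sub; rewrite !inE eqxx.
have mb : b \in [:: i;j;k] by apply: sub; rewrite !inE eqxx orbT.
have mc : c \in [:: i;j;k] by apply: sub; rewrite !inE eqxx !orbT.
have Hba : L b a = false by apply/negP=> h; exact: (asy a b Hab h nab ma mb).
have Hcb : L c b = false by apply/negP=> h; exact: (asy b c Hbc h nbc mb mc).
have Hca : L c a = false by apply/negP=> h; exact: (asy a c Hac h nac ma mc).
have ji : (j == i) = false by rewrite eq_sym; apply/negbTE.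
have ki : (k == i) = false by rewrite eq_sym; apply/negbTE.
have kj : (k == j) = false by rewrite eq_sym; apply/negbTE.
move/negbTE: ij => ij; move/negbTE: ik => ik; move/negbTE: jk => jk.
rewrite cyc_eq3 /cyc3.
move: ma mb mc nab nac nbc Hab Hbc Hac Hba Hcb Hca; rewrite !inE.
by case/or3P=> /eqP-> /or3P[]/eqP-> /or3P[]/eqP-> //;
  rewrite ?eqxx ?ij ?ik ?jk ?ji ?ki ?kj //= => _ _ _ h1 h2 h3 h4 h5 h6;
  rewrite ?h1 ?h2 ?h3 ?h4 ?h5 ?h6 ?eqseq_cons ?eqxx ?ij ?ik ?jk ?ji ?ki ?kj ?andbF ?orbT.
Qed.

Lemma tripleC n (L : rel 'I_n) (s : seq 'I_n) (i j k : 'I_n) :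
  transitive L -> sorted L s -> uniq s -> i \in s -> j \in s -> k \in s ->
  i != j -> i != k -> j != k ->
  (forall a b, L a b -> L b a -> a != b -> a \in [:: i;j;k] -> b \in [::i;j;k] -> False) ->
  cyc_eq (filter (fun v => v \in [:: i; j; k]) s) [:: i; k; j] <-> cyc3 L i k j.
Proof.
move=> tL ss us hi hj hk ij ik jk asy.
have ut := filter_uniq (fun v => v \in [:: i; j; k]) us.
have pt : perm_eq (filter (fun v => v \in [:: i; j; k]) s) [:: i; j; k].
  apply: uniq_perm => //; first by rewrite /= !inE negb_or ij ik jk.
  move=> v; rewrite mem_filter; case hv: (v \in [:: i; j; k]) => //=.
  by move: hv; rewrite !inE => /or3P[]/eqP->.
apply: tripleC0 => //.
- exact: sorted_filter.
- by rewrite (perm_size pt).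
- by move=> v; rewrite (perm_mem pt).
Qed.

Definition Or n (G : rel 'I_n) (s : seq 'I_n) : rel 'I_n :=
  fun a b => G a b && (index a s < index b s).

Lemma Or_rot1 n (G : rel 'I_n) (s : seq 'I_n) :
  symmetric G -> irreflexive G -> uniq s -> (forall v, v \in s) ->
  torEquiv (Or G s) (Or G (rot 1 s)).
Proof.
move=> Gs Gi; case: s => [_ h|a t us hall]; first by apply: te_ext.
apply: (@te_flip _ _ _ a).
  by move=> b; rewrite /Or /= eqxx ltn0 andbF.
move: us => /= /andP[na ut].
move=> b c; rewrite rot1_cons -cats1 /Or /flip_at /= !index_cat /=.
have mt : forall v, v != a -> v \in t.
  by move=> v hv; move: (hall v); rewrite inE (negbTE hv).
have im : forall v, v != a -> index v t < size t.
  by move=> v hv; rewrite index_mem mt.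
case: (eqVneq b a) => [->|ba]; case: (eqVneq c a) => [->|ca];
  rewrite ?eqxx ?(negbTE na) //=.
- by rewrite Gi.
- rewrite (mt c ca) ltn0 andbF addn0.
  by rewrite ltnNge (ltnW (im c ca)) andbF.
- by rewrite (mt b ba) addn0 (im b ba) Gs.
- by rewrite (mt b ba) (mt c ca) ltnS.
Qed.

Lemma Or_rot n (G : rel 'I_n) (s : seq 'I_n) m :
  symmetric G -> irreflexive G -> uniq s -> (forall v, v \in s) ->
  torEquiv (Or G s) (Or G (rot m s)).
Proof.
move=> Gs Gi us hall; elim: m => [|m IH].
  by rewrite rot0; apply: te_ext.
case: (leqP (size s) m) => hm.
  by rewrite !rot_oversize // in IH *; apply: leqW.
apply: (te_trans IH).
rewrite -add1n rotD //.
apply: Or_rot1 => //; first by rewrite rot_uniq.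
by move=> v; rewrite mem_rot.
Qed.

Local Open Scope ring_scope.

Lemma ylt_idx (R : realFieldType) n (y : 'I_n -> R) (s : seq 'I_n) a b :
  uniq s -> sorted (fun u v => y u < y v) s -> a \in s -> b \in s ->
  (y a < y b) = (index a s < index b s)%N.
Proof.
move=> us ss ha hb; apply: (idx_order (L := fun u v => y u < y v)) => //.
- by move=> u v w; apply: lt_trans.
- by move=> u v /= h; rewrite ltNge (ltW h).
Qed.

Definition lexr (R : realFieldType) n (x : 'I_n -> R) (r : 'I_n -> nat) : rel 'I_n :=
  fun a b => (x a < x b) || ((x a == x b) && (r a <= r b)%N).

Lemma lexr_trans (R : realFieldType) n (x : 'I_n -> R) r : transitive (lexr x r).
Proof.
move=> b a c /orP[h1|/andP[/eqP e1 h1]] /orP[h2|/andP[/eqP e2 h2]];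
  apply/orP.
- by left; apply: lt_trans h2.
- by left; rewrite -e2.
- by left; rewrite e1.
- by right; rewrite e1 e2 eqxx (leq_trans h1 h2).
Qed.

Lemma lexr_total (R : realFieldType) n (x : 'I_n -> R) r : total (lexr x r).
Proof.
move=> a b; rewrite /lexr; case: (ltgtP (x a) (x b)) => //= _.
exact: leq_total.
Qed.

Lemma total_sort (R : realFieldType) n (G om : rel 'I_n) (x : 'I_n -> R) r :
  symmetric G -> irreflexive G -> in_chamber G om x ->
  total_ext R G om (sort (lexr x r) (enum 'I_n)).
Proof.
move=> Gs Gi [x01 [xne xte]].
set w := sort _ _.
have uw : uniq w by rewrite sort_uniq enum_uniq.
have aw : forall v, v \in w by move=> v; rewrite mem_sort mem_enum.
have sw : sorted (lexr x r) w by apply: sort_sorted; apply: lexr_total.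
split; first by rewrite perm_sort perm_refl.
move=> y y01 [m sy].
have us' : uniq (rot m w) by rewrite rot_uniq.
have as' : forall v, v \in rot m w by move=> v; rewrite mem_rot.
split=> //; split.
  move=> a b Gab; have ab : a != b by apply/eqP=> e; rewrite e Gi in Gab.
  rewrite neq_lt !(ylt_idx us' sy) //.
  case: (ltngtP (index a (rot m w)) (index b (rot m w))) => // e.
  by rewrite (index_inj a (as' a) (as' b) e) eqxx in ab.
apply: (@te_trans _ _ (Or G (rot m w))).
  by apply: te_ext => a b; rewrite /orient_of /Or (ylt_idx us' sy).
apply: (@te_trans _ _ (Or G w)); first by apply: te_sym; apply: Or_rot.
apply: (@te_trans _ _ (orient_of G x)) => //.
apply: te_ext => a b; rewrite /Or /orient_of.
case Gab: (G a b) => //=.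
have xab := xne a b Gab.
case: (ltngtP (index a w) (index b w)) => e.
- have := sorted_ltn_index (@lexr_trans _ _ x r) sw a b (aw a) (aw b) e.
  by rewrite /lexr (negbTE xab) /= orbF => ->.
- have := sorted_ltn_index (@lexr_trans _ _ x r) sw b a (aw b) (aw a) e.
  rewrite /lexr eq_sym (negbTE xab) /= orbF => h.
  by rewrite ltNge (ltW h).
- by rewrite (index_inj a (aw a) (aw b) e) Gi in Gab.
Qed.

Close Scope ring_scope.

Lemma asbool_eq (P Q : Prop) : (P <-> Q) -> asbool P = asbool Q.
Proof.
move=> [PQ QP]; rewrite /asbool.
case: excluded_middle_informative => p; case: excluded_middle_informative => q //.
- by case: q; apply: PQ.
- by case: p; apply: QP.
Qed.

Lemma cyc_sorted3 (R : realFieldType) n (x : 'I_n -> R) a b c :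
  cyc_sorted x [:: a; b; c] -> cyc3 (fun u v => (x u < x v)%R) a b c.
Proof.
case=> [[|[|[|m]]]] /=; rewrite /cyc3 ?andbT.
- by move=> ->.
- by move=> ->; rewrite orbT.
- by move=> ->; rewrite !orbT.
- by move=> ->.
Qed.

Lemma cyc3_sorted (R : realFieldType) n (x : 'I_n -> R) a b c :
  cyc3 (fun u v => (x u < x v)%R) a b c -> cyc_sorted x [:: a; b; c].
Proof.
by case/or3P=> h; [exists 0|exists 1|exists 2]; rewrite /= ?andbT.
Qed.

Lemma brute (R : realFieldType) n (x : 'I_n -> R) (i j k : 'I_n) :
  i != j -> i != k -> j != k ->
  cyc3 (lexr x (index^~ [:: i; j; k])) i k j ->
  cyc3 (lexr x (index^~ [:: k; j; i])) i k j ->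
  cyc3 (fun u v => (x u < x v)%R) i k j.
Proof.
move=> ij ik jk.
have ji : (j == i) = false by rewrite eq_sym; apply/negbTE.
have ki : (k == i) = false by rewrite eq_sym; apply/negbTE.
have kj : (k == j) = false by rewrite eq_sym; apply/negbTE.
move/negbTE: ij => ij; move/negbTE: ik => ik; move/negbTE: jk => jk.
rewrite /cyc3 /lexr /= !eqxx ij ik jk ji ki kj /=.
case: (ltgtP (x i) (x k)) => h1; case: (ltgtP (x k) (x j)) => h2;
  case: (ltgtP (x i) (x j)) => h3 //=; try lra.
Qed.

Lemma lexr_asym (R : realFieldType) n (x : 'I_n -> R) r a b :
  lexr x r a b -> lexr x r b a -> r a != r b -> False.
Proof.
rewrite /lexr => /orP[h1|/andP[/eqP e1 h1]] /orP[h2|/andP[/eqP e2 h2]].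
- by have := lt_trans h1 h2; rewrite ltxx.
- by rewrite e2 ltxx in h1.
- by rewrite e1 ltxx in h2.
- by rewrite eqn_leq h1 h2.
Qed.

Lemma idx_asym (R : realFieldType) n (s : seq 'I_n) (i j k : 'I_n) (x : 'I_n -> R) :
  perm_eq s [:: i; j; k] ->
  forall a b, lexr x (index^~ s) a b -> lexr x (index^~ s) b a -> a != b ->
  a \in [:: i; j; k] -> b \in [:: i; j; k] -> False.
Proof.
move=> ps a b h1 h2 ab ha hb; apply: (lexr_asym h1 h2).
apply/negP=> /eqP e; move/negP: ab; apply; apply/eqP.
by apply: (index_inj a _ _ e); rewrite (perm_mem ps).
Qed.

End Helpers.

Theorem mainTheorem5 (R : realFieldType) (n : nat) (G om : rel 'I_n)
  (Gsym : symmetric G) (Girr : irreflexive G)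
  (Hom : acyc_orientation G om) (i j : 'I_n)
  (H3 : 2 < #|tor_interval R G om i j|) :
  tor_interval R G om i j =
  [set k | (k == i) || (k == j) ||
     asbool (forall w, total_ext R G om w ->
               cyc_eq (filter (fun v => v \in [:: i; j; k]) w) [:: i; k; j])].
Proof.
have ij : i != j.
  by apply/negP=> /eqP e; move: H3; rewrite /tor_interval e; case: eqP => // _; rewrite cards1.
have tc : asbool (toric_chain2 R G om i j).
  by move: H3; rewrite /tor_interval (negbTE ij); case: asbool; rewrite ?cards0.
rewrite /tor_interval (negbTE ij) tc; apply/setP => k; rewrite !inE.
case: (eqVneq k i) => [->|ki]; first by [].
case: (eqVneq k j) => [->|kj]; first by rewrite orbT.
rewrite /=; apply: asbool_eq.
have ik : i != k by rewrite eq_sym.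
have jk : j != k by rewrite eq_sym.
split.
- case=> _ HR w [pw tw].
  have uw : uniq w by rewrite (perm_uniq pw) enum_uniq.
  have aw : forall v, v \in w by move=> v; rewrite (perm_mem pw) mem_enum.
  have sw : size w = n by rewrite (perm_size pw) size_enum_ord.
  have n0 : (0 < n)%N by apply: leq_ltn_trans (ltn_ord i).
  pose x : 'I_n -> R := fun a => ((index a w)%:R / n%:R)%R.
  have xlt : forall a b, (x a < x b)%R = (index a w < index b w)%N.
    by move=> a b; rewrite /x ltr_pM2r ?invr_gt0 ?ltr0n // ltr_nat.
  have x01 : in01 x.
    move=> a; split; first by rewrite /x divr_ge0 ?ler0n.
    rewrite /x ltr_pdivrMr ?ltr0n // mul1r ltr_nat.
    by have := index_mem a w; rewrite aw sw.
  have cs : cyc_sorted x w.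
    exists 0; rewrite rot0; apply: sub_sorted (idx_sorted uw).
    by move=> a b /=; rewrite xlt.
  have := cyc_sorted3 (HR x (tw x x01 cs)).
  have -> : cyc3 (fun u v => (x u < x v)%R) i k j =
            cyc3 (fun u v => (index u w < index v w)%N) i k j.
    by rewrite /cyc3 !xlt.
  move=> h; apply/(tripleC (L := fun u v => (index u w < index v w)%N)) => //.
  + by move=> b a c; apply: ltn_trans.
  + exact: idx_sorted.
  + by move=> a b h1 h2; have := ltn_trans h1 h2; rewrite ltnn.
- move=> HL; split; first by rewrite /= !inE !negb_or ik ij kj.
  move=> x ch; apply: cyc3_sorted; apply: brute => //.
  + set r := index^~ [:: i; j; k].
    have h := HL _ (total_sort r Gsym Girr ch).
    have T := @tripleC n (lexr x r) (sort (lexr x r) (enum 'I_n)) i j k.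
    apply: (iffLR (T _ _ _ _ _ _ _ _ _ _) h) => //.
    * exact: lexr_trans.
    * by apply: sort_sorted; apply: lexr_total.
    * by rewrite sort_uniq enum_uniq.
    * by rewrite mem_sort mem_enum.
    * by rewrite mem_sort mem_enum.
    * by rewrite mem_sort mem_enum.
    * by apply: idx_asym.
  + set r := index^~ [:: k; j; i].
    have h := HL _ (total_sort r Gsym Girr ch).
    have T := @tripleC n (lexr x r) (sort (lexr x r) (enum 'I_n)) i j k.
    apply: (iffLR (T _ _ _ _ _ _ _ _ _ _) h) => //.
    * exact: lexr_trans.
    * by apply: sort_sorted; apply: lexr_total.
    * by rewrite sort_uniq enum_uniq.
    * by rewrite mem_sort mem_enum.
    * by rewrite mem_sort mem_enum.
    * by rewrite mem_sort mem_enum.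
    * apply: idx_asym.
      apply: uniq_perm.
      - by rewrite /= !inE !negb_or kj ki eq_sym ij.
      - by rewrite /= !inE !negb_or ij ik jk.
      - by move=> v; rewrite !inE; case: (v == i); case: (v == j); case: (v == k); rewrite ?orbT.
Qed.
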